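(* If the quadrilateral $Q$ in $K^2$ has no parallel sides and no parallel diagonals, then a pair of bisectors of $Q$ is $Q$-antipodal if and only if it is $Q$-orthogonal.
   Context: $K$ is a field of characteristic $\neq 2$. Every line $L$ in $K^2$ has an equation $tX-uY+v=0$ normalized so that $t=1$ if $u=0$ and $u=1$ if $u\neq 0$; coefficients denoted $t_L,u_L,v_L$. A quadrilateral $Q=ABA'B'$ consists of four distinct lines $A,B,A',B'$ (sides), not all through one point, with adjacent sides ($A,B$; $B,A'$; $A',B'$; $B',A$) not parallel; opposite sides may be parallel. Vertices: $A\cap B$, $B\cap A'$, $A'\cap B'$, $B'\cap A$ (two may coincide if three sides are concurrent). Diagonals: the lines through nonadjacent vertices. The centroid is the average of the four vertices. Let $\alpha=t_Au_Bu_{A'}u_{B'}-u_At_Bu_{A'}u_{B'}+u_Au_Bt_{A'}u_{B'}-u_Au_Bu_{A'}t_{B'}$, $\beta=t_Au_Bt_{A'}u_{B'}-u_At_Bu_{A'}t_{B'}$, $\gamma=t_At_Bt_{A'}u_{B'}-t_At_Bu_{A'}t_{B'}+t_Au_Bt_{A'}t_{B'}-u_At_Bt_{A'}t_{B'}$, and $\langle \mathbf v,\mathbf w\rangle_Q=\mathbf v^T\begin{pmatrix}\gamma&-\beta\\-\beta&\alpha\end{pmatrix}\mathbf w$. Lines $\ell_1,\ell_2$ are $Q$-orthogonal if $\langle (u_{\ell_1},t_{\ell_1}),(u_{\ell_2},t_{\ell_2})\rangle_Q=0$. A line $\ell$ crosses a pair $\{\ell_1,\ell_2\}$ if distinct from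 both and not parallel to both; $\mathrm{mid}_{\{\ell_1,\ell_2\}}(\ell)$ is the midpoint of the points where $\ell$ meets $\ell_1,\ell_2$ (the point at infinity of $\ell$ if one is at infinity). $\ell$ bisects $Q$ (is a bisector) if $\mathrm{mid}_{\mathsf P}(\ell)$ is the same for all pairs $\mathsf P$ among $\{A,A'\},\{B,B'\}$ that $\ell$ crosses; this common point is the midpoint of the bisector. A pair $\{\ell_1,\ell_2\}$ of bisectors (possibly $\ell_1=\ell_2$) is $Q$-antipodal if the midpoint of their midpoints is the centroid of $Q$. *)

(* Defs.v *)
From HB Require Import structures.
From mathcomp Require Import all_boot all_order all_algebra.
Set Implicit Arguments. Unset Strict Implicit. Unset Printing Implicit Defensive.
Import Order.TTheory GRing.Theory Num.Theory.
Local Open Scope ring_scope.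

Section Geometry.
Variable K : fieldType.

(* A line  t X - u Y + v = 0, normalised: t = 1 if u = 0, and u = 1 if u <> 0. *)
Definition normalized (t u : K) : bool := if u == 0 then t == 1 else u == 1.

Record line := Line { lt : K; lu : K; lv : K; line_norm : normalized lt lu }.

Definition point := (K * K)%type.

Definition on_line (p : point) (l : line) : Prop :=
  lt l * p.1 - lu l * p.2 + lv l = 0.

Definition parallel (l1 l2 : line) : Prop := lt l1 * lu l2 - lu l1 * lt l2 = 0.

(* intersection point of two non-parallel lines (Cramer's rule) *)
Definition meet (l1 l2 : line) : point :=
  let D := lu l1 * lt l2 - lt l1 * lu l2 in
  ((lv l1 * lu l2 - lu l1 * lv l2) / D, (lt l2 * lv l1 - lt l1 * lv l2) / D).

Definition padd (p q : point) : point := (p.1 + q.1, p.2 + q.2).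
Definition pscale (c : K) (p : point) : point := (c * p.1, c * p.2).
Definition pmid (p q : point) : point := pscale (2%:R)^-1 (padd p q).

Definition line_through_coef (p q : point) : K * K * K :=
  let dx := q.1 - p.1 in let dy := q.2 - p.2 in
  if dx == 0 then (1, 0, - p.1)
  else let t := dy / dx in (t, 1, p.2 - t * p.1).

Lemma line_through_norm (p q : point) :
  normalized (line_through_coef p q).1.1 (line_through_coef p q).1.2.
Proof.
rewrite /line_through_coef; case: ifP => _ /=;
  by rewrite /normalized ?eqxx ?oner_eq0.
Qed.

Definition line_through (p q : point) : line :=
  @Line (line_through_coef p q).1.1 (line_through_coef p q).1.2
        (line_through_coef p q).2 (line_through_norm p q).

Definition quadrilateral (A B A' B' : line) : Prop :=
  [/\ A <> B, A <> A' & A <> B'] /\ [/\ B <> A', B <> B' & A' <> B'] /\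
  ~ (exists p : point, [/\ on_line p A, on_line p B, on_line p A' & on_line p B']) /\
  [/\ ~ parallel A B, ~ parallel B A', ~ parallel A' B' & ~ parallel B' A].

Definition vert1 (A B A' B' : line) := meet A B.
Definition vert2 (A B A' B' : line) := meet B A'.
Definition vert3 (A B A' B' : line) := meet A' B'.
Definition vert4 (A B A' B' : line) := meet B' A.

Definition diag1 (A B A' B' : line) :=
  line_through (vert1 A B A' B') (vert3 A B A' B').
Definition diag2 (A B A' B' : line) :=
  line_through (vert2 A B A' B') (vert4 A B A' B').

Definition centroid (A B A' B' : line) : point :=
  pscale (4%:R)^-1 (padd (padd (vert1 A B A' B') (vert2 A B A' B'))
                         (padd (vert3 A B A' B') (vert4 A B A' B'))).

Definition alpha (A B A' B' : line) : K :=
  lt A * lu B * lu A' * lu B' - lu A * lt B * lu A' * lu B'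
  + lu A * lu B * lt A' * lu B' - lu A * lu B * lu A' * lt B'.
Definition beta (A B A' B' : line) : K :=
  lt A * lu B * lt A' * lu B' - lu A * lt B * lu A' * lt B'.
Definition gamma (A B A' B' : line) : K :=
  lt A * lt B * lt A' * lu B' - lt A * lt B * lu A' * lt B'
  + lt A * lu B * lt A' * lt B' - lu A * lt B * lt A' * lt B'.

Definition Qform (A B A' B' : line) (v w : K * K) : K :=
  gamma A B A' B' * v.1 * w.1 - beta A B A' B' * v.1 * w.2
  - beta A B A' B' * v.2 * w.1 + alpha A B A' B' * v.2 * w.2.

Definition Q_orthogonal (A B A' B' : line) (l1 l2 : line) : Prop :=
  Qform A B A' B' (lu l1, lt l1) (lu l2, lt l2) = 0.

Definition crosses (l l1 l2 : line) : Prop :=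
  l <> l1 /\ l <> l2 /\ ~ (parallel l l1 /\ parallel l l2).

(* mid_{l1,l2}(l): None encodes the point at infinity of l *)
Definition mid (l l1 l2 : line) : option point :=
  if (lt l * lu l1 - lu l * lt l1 == 0) || (lt l * lu l2 - lu l * lt l2 == 0)
  then None else Some (pmid (meet l l1) (meet l l2)).

Definition bisects (A B A' B' : line) (l : line) : Prop :=
  crosses l A A' -> crosses l B B' -> mid l A A' = mid l B B'.

Definition bisector_midpoint (A B A' B' : line) (l : line) (m : point) : Prop :=
  (crosses l A A' /\ mid l A A' = Some m) \/ (crosses l B B' /\ mid l B B' = Some m).

Definition Q_antipodal (A B A' B' : line) (l1 l2 : line) : Prop :=
  exists m1 m2 : point,
    [/\ bisector_midpoint A B A' B' l1 m1, bisector_midpoint A B A' B' l2 m2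
      & pmid m1 m2 = centroid A B A' B'].

End Geometry.

(* Main.v *)
Require Import Defs.
From HB Require Import structures.
From mathcomp Require Import all_boot all_order all_algebra.
From mathcomp Require Import ring.
From Stdlib Require Import Classical.
Import GRing.Theory.
Set Implicit Arguments. Unset Strict Implicit. Unset Printing Implicit Defensive.
Local Open Scope ring_scope.

Definition ev (K : fieldType) (X : line K) (m : point K) := lt X * m.1 - lu X * m.2 + lv X.
Definition cr (K : fieldType) (X Y : line K) := lu X * lt Y - lt X * lu Y.
Definition Dd (K : fieldType) (d : K * K) (X : line K) := d.1 * lt X - d.2 * lu X.
Definition E (K : fieldType) (X Y : line K) (d : K * K) (m : point K) :=
  ev X m * Dd d Y + ev Y m * Dd d X.
Definition dir (K : fieldType) (l : line K) : K * K := (lu l, lt l).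
Definition edir (K : fieldType) (A B A' B' : line K) (d : K * K) : K * K :=
  (- alpha A B A' B' * d.2 + beta A B A' B' * d.1,
   - beta A B A' B' * d.2 + gamma A B A' B' * d.1).
Definition refl2 (K : fieldType) (A B A' B' : line K) (m : point K) : point K :=
  (2%:R * (centroid A B A' B').1 - m.1, 2%:R * (centroid A B A' B').2 - m.2).

Lemma four_neq0 (K : fieldType) : (2%:R : K) != 0 -> (4%:R : K) != 0.
Proof. by move=> h; rewrite (_ : 4 = 2 * 2)%N // natrM mulf_neq0. Qed.

Lemma lin2 (K : fieldType) (p1 p2 q1 q2 x y : K) :
  p1 * x + p2 * y = 0 -> q1 * x + q2 * y = 0 -> p1 * q2 - p2 * q1 != 0 ->
  x = 0 /\ y = 0.
Proof.
move=> h1 h2 hd.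
have ex : x * (p1 * q2 - p2 * q1) = q2 * (p1 * x + p2 * y) - p2 * (q1 * x + q2 * y) by ring.
have ey : y * (p1 * q2 - p2 * q1) = p1 * (q1 * x + q2 * y) - q1 * (p1 * x + p2 * y) by ring.
rewrite h1 h2 !mulr0 subr0 in ex ey.
by split; apply/eqP; move: ex ey => /eqP; rewrite mulf_eq0 (negPf hd) orbF => ? /eqP;
   rewrite mulf_eq0 (negPf hd) orbF.
Qed.

Lemma dir_nz (K : fieldType) (l : line K) : ~ (lu l = 0 /\ lt l = 0).
Proof.
case: l => t u v /=; rewrite /normalized.
case: eqP => [-> /eqP -> [_ /eqP]|hu _ [hu0 _]] //; by rewrite oner_eq0.
Qed.

Lemma crC (K : fieldType) (X Y : line K) : cr X Y = - cr Y X.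
Proof. rewrite /cr; ring. Qed.

Lemma parE (K : fieldType) (X Y : line K) : parallel X Y <-> cr X Y = 0.
Proof.
rewrite /parallel /cr; have -> : lt X * lu Y - lu X * lt Y = - (lu X * lt Y - lt X * lu Y) by ring.
by split => [/eqP|->]; rewrite ?oppr0 // oppr_eq0 => /eqP.
Qed.

Lemma npar (K : fieldType) (X Y : line K) : ~ parallel X Y -> cr X Y != 0.
Proof. by move=> h; apply/eqP => /parE. Qed.

Lemma par_trans (K : fieldType) (l X Y : line K) : cr l X = 0 -> cr l Y = 0 -> cr X Y = 0.
Proof.
move=> h1 h2; case: (eqVneq (cr X Y) 0) => // hn; exfalso.
apply: (@dir_nz _ l).
apply: (@lin2 _ (lt X) (- lu X) (lt Y) (- lu Y)).
- by transitivity (cr l X); [rewrite /cr; ring | exact h1].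
- by transitivity (cr l Y); [rewrite /cr; ring | exact h2].
- by rewrite (_ : _ - _ = cr X Y) // /cr; ring.
Qed.

Lemma midE (K : fieldType) (l X Y : line K) : mid l X Y =
  if (cr l X == 0) || (cr l Y == 0) then None else Some (pmid (meet l X) (meet l Y)).
Proof.
rewrite /mid.
have e1 : lt l * lu X - lu l * lt X = - cr l X by rewrite /cr; ring.
have e2 : lt l * lu Y - lu l * lt Y = - cr l Y by rewrite /cr; ring.
by rewrite e1 e2 !oppr_eq0.
Qed.

Lemma mid_Some (K : fieldType) (l X Y : line K) m : mid l X Y = Some m ->
  [/\ cr l X != 0, cr l Y != 0 & m = pmid (meet l X) (meet l Y)].
Proof. by rewrite midE; case: eqP => //= h1; case: eqP => //= h2 [<-]; split => //; apply/eqP. Qed.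

Lemma mid_E (K : fieldType) (l X Y : line K) m : (2%:R : K) != 0 ->
  mid l X Y = Some m -> E X Y (dir l) m = 0 /\ ev l m = 0.
Proof.
move=> h2 /mid_Some [h1 h3 ->]; move: h1 h3; rewrite /cr => h1 h3.
rewrite /E /ev /Dd /dir /pmid /pscale /padd /meet /=; split; field; by rewrite ?h1 ?h3 ?h2.
Qed.

Lemma meet_on (K : fieldType) (X Y : line K) : cr X Y != 0 ->
  ev X (meet X Y) = 0 /\ ev Y (meet X Y) = 0.
Proof. rewrite /cr => h; rewrite /ev /meet /=; split; field; exact: h. Qed.

Lemma I1 (K : fieldType) (A B A' B' : line K) d m :
  (2%:R : K) != 0 -> cr A B != 0 -> cr B A' != 0 -> cr A' B' != 0 -> cr B' A != 0 ->
  E A A' (edir A B A' B' d) (refl2 A B A' B' m) =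
   - (2%:R^-1) * (cr A B * cr A' B' + cr B A' * cr B' A) * E A A' d m
   - 2%:R^-1 * cr A A' ^+ 2 * E B B' d m.
Proof.
move=> h2 h1 h3 h4 h5; have h6 := four_neq0 h2.
rewrite /E /edir /refl2 /centroid /ev /Dd /alpha /beta /gamma /vert1 /vert2 /vert3 /vert4 /meet /pscale /padd /=.
move: h1 h3 h4 h5; rewrite /cr => h1 h3 h4 h5.
field; by rewrite ?h1 ?h2 ?h3 ?h4 ?h5 ?h6.
Qed.

Lemma I2 (K : fieldType) (A B A' B' : line K) d m :
  (2%:R : K) != 0 -> cr A B != 0 -> cr B A' != 0 -> cr A' B' != 0 -> cr B' A != 0 ->
  E B B' (edir A B A' B' d) (refl2 A B A' B' m) =
   2%:R^-1 * cr B B' ^+ 2 * E A A' d m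
   + (2%:R^-1) * (cr A B * cr A' B' + cr B A' * cr B' A) * E B B' d m.
Proof.
move=> h2 h1 h3 h4 h5; have h6 := four_neq0 h2.
rewrite /E /edir /refl2 /centroid /ev /Dd /alpha /beta /gamma /vert1 /vert2 /vert3 /vert4 /meet /pscale /padd /=.
move: h1 h3 h4 h5; rewrite /cr => h1 h3 h4 h5.
field; by rewrite ?h1 ?h2 ?h3 ?h4 ?h5 ?h6.
Qed.

Lemma F1 (K : fieldType) (A B A' B' : line K) :
  alpha A B A' B' * gamma A B A' B' - beta A B A' B' ^+ 2 =
  - (cr A B * cr B A' * cr A' B' * cr B' A).
Proof. rewrite /alpha /beta /gamma /cr; ring. Qed.

Definition lvec (K : fieldType) (X Y : line K) (m : point K) : K * K :=
  (ev X m * lt Y + ev Y m * lt X, - (ev X m * lu Y + ev Y m * lu X)).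

Lemma E_lvec (K : fieldType) (X Y : line K) d m :
  E X Y d m = d.1 * (lvec X Y m).1 + d.2 * (lvec X Y m).2.
Proof. rewrite /E /lvec /Dd /=; ring. Qed.

Definition dcross (K : fieldType) (A B A' B' : line K) : K :=
  let V1 := vert1 A B A' B' in let V2 := vert2 A B A' B' in
  let V3 := vert3 A B A' B' in let V4 := vert4 A B A' B' in
  (V3.1 - V1.1) * (V4.2 - V2.2) - (V3.2 - V1.2) * (V4.1 - V2.1).

Lemma F2 (K : fieldType) (A B A' B' : line K) :
  cr A B != 0 -> cr B A' != 0 -> cr A' B' != 0 -> cr B' A != 0 ->
  cr A A' != 0 -> cr B B' != 0 ->
  ((lvec A A' (meet B B')).1 * (lvec B B' (meet A A')).2
   - (lvec A A' (meet B B')).2 * (lvec B B' (meet A A')).1) * cr A A' * cr B B'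
  = - 2%:R * (cr A B * cr B A' * cr A' B' * cr B' A) * dcross A B A' B'.
Proof.
move=> h1 h3 h4 h5 h6 h7.
rewrite /lvec /dcross /ev /vert1 /vert2 /vert3 /vert4 /meet /=.
move: h1 h3 h4 h5 h6 h7; rewrite /cr => h1 h3 h4 h5 h6 h7.
field; by rewrite ?h1 ?h3 ?h4 ?h5 ?h6 ?h7.
Qed.
Lemma det0 (K : fieldType) (p1 p2 q1 q2 x y : K) :
  p1 * x + p2 * y = 0 -> q1 * x + q2 * y = 0 -> ~ (x = 0 /\ y = 0) ->
  p1 * q2 - p2 * q1 = 0.
Proof.
move=> h1 h2 hn; case: (eqVneq (p1 * q2 - p2 * q1) 0) => // hd.
by case: hn; apply: lin2 h1 h2 hd.
Qed.

Lemma kill (K : fieldType) (a b x : K) : ~ (a = 0 /\ b = 0) -> a * x = 0 -> b * x = 0 -> x = 0.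
Proof.
move=> hn /eqP; rewrite mulf_eq0 => /orP [/eqP ha|/eqP //] /eqP.
rewrite mulf_eq0 => /orP [/eqP hb|/eqP //]; by case: hn.
Qed.

Lemma par_kill (K : fieldType) (a1 b1 a2 b2 z1 z2 : K) : a1 * b2 - b1 * a2 = 0 ->
  ~ (a2 = 0 /\ b2 = 0) -> a2 * z1 + b2 * z2 = 0 -> a1 * z1 + b1 * z2 = 0.
Proof.
move=> hd hn hz; apply: (kill hn).
- have -> : a2 * (a1 * z1 + b1 * z2) = a1 * (a2 * z1 + b2 * z2) - z2 * (a1 * b2 - b1 * a2) by ring.
  by rewrite hz hd !mulr0 subr0.
- have -> : b2 * (a1 * z1 + b1 * z2) = b1 * (a2 * z1 + b2 * z2) + z1 * (a1 * b2 - b1 * a2) by ring.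
  by rewrite hz hd !mulr0 addr0.
Qed.

Lemma Linj (K : fieldType) (X Y : line K) d d' m :
  E X Y d m = 0 -> E X Y d' m = 0 -> d.1 * d'.2 - d.2 * d'.1 != 0 -> cr X Y != 0 ->
  ev X m = 0 /\ ev Y m = 0.
Proof.
move=> h1 h2 hd hc.
apply: (@lin2 _ (Dd d Y) (Dd d X) (Dd d' Y) (Dd d' X)).
- by rewrite -h1 /E; ring.
- by rewrite -h2 /E; ring.
- have -> : Dd d Y * Dd d' X - Dd d X * Dd d' Y = (d.1 * d'.2 - d.2 * d'.1) * - cr X Y
    by rewrite /Dd /cr; ring.
  by rewrite mulf_neq0 // oppr_eq0.
Qed.

Lemma Epar (K : fieldType) (X Y : line K) d e m :
  E X Y e m = 0 -> d.1 * e.2 - d.2 * e.1 = 0 -> ~ (e.1 = 0 /\ e.2 = 0) -> E X Y d m = 0.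
Proof.
move=> h hd hn; rewrite E_lvec; rewrite E_lvec in h.
apply: (kill hn).
- have -> : e.1 * (d.1 * (lvec X Y m).1 + d.2 * (lvec X Y m).2) =
    d.1 * (e.1 * (lvec X Y m).1 + e.2 * (lvec X Y m).2) - (lvec X Y m).2 * (d.1 * e.2 - d.2 * e.1) by ring.
  by rewrite h hd !mulr0 subr0.
- have -> : e.2 * (d.1 * (lvec X Y m).1 + d.2 * (lvec X Y m).2) =
    d.2 * (e.1 * (lvec X Y m).1 + e.2 * (lvec X Y m).2) + (lvec X Y m).1 * (d.1 * e.2 - d.2 * e.1) by ring.
  by rewrite h hd !mulr0 addr0.
Qed.

Lemma edir_nz (K : fieldType) (A B A' B' : line K) d : ~ (d.1 = 0 /\ d.2 = 0) ->
  cr A B * cr B A' * cr A' B' * cr B' A != 0 ->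
  ~ ((edir A B A' B' d).1 = 0 /\ (edir A B A' B' d).2 = 0).
Proof.
move=> hd hp [h1 h2]; apply: hd.
have hS : alpha A B A' B' * gamma A B A' B' - beta A B A' B' ^+ 2 != 0 by rewrite F1 oppr_eq0.
have e1 : (alpha A B A' B' * gamma A B A' B' - beta A B A' B' ^+ 2) * d.1 = 0.
  have -> : (alpha A B A' B' * gamma A B A' B' - beta A B A' B' ^+ 2) * d.1 =
     - beta A B A' B' * (edir A B A' B' d).1 + alpha A B A' B' * (edir A B A' B' d).2
     by rewrite /edir /=; ring.
  by rewrite h1 h2 !mulr0 addr0.
have e2 : (alpha A B A' B' * gamma A B A' B' - beta A B A' B' ^+ 2) * d.2 = 0.
  have -> : (alpha A B A' B' * gamma A B A' B' - beta A B A' B' ^+ 2) * d.2 =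
     - (gamma A B A' B' * (edir A B A' B' d).1 - beta A B A' B' * (edir A B A' B' d).2)
     by rewrite /edir /=; ring.
  by rewrite h1 h2 !mulr0 subr0 oppr0.
by move/eqP: e1; move/eqP: e2; rewrite !mulf_eq0 (negPf hS) /= => /eqP -> /eqP ->.
Qed.

Definition ca (K : fieldType) (X Y : line K) d := lt X * Dd d Y + lt Y * Dd d X.
Definition cb (K : fieldType) (X Y : line K) d := - (lu X * Dd d Y + lu Y * Dd d X).

Lemma Ediff (K : fieldType) (X Y : line K) d m m' :
  E X Y d m - E X Y d m' = ca X Y d * (m.1 - m'.1) + cb X Y d * (m.2 - m'.2).
Proof. rewrite /E /ca /cb /ev; ring. Qed.

Lemma ab_nz (K : fieldType) (X Y : line K) d : cr X Y != 0 -> ~ (d.1 = 0 /\ d.2 = 0) ->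
  ~ (ca X Y d = 0 /\ cb X Y d = 0).
Proof.
move=> hc hd [ha hb].
have [h1 h2] : Dd d Y = 0 /\ Dd d X = 0.
  apply: (@lin2 _ (lt X) (lt Y) (lu X) (lu Y)).
  - by rewrite -ha /ca.
  - by apply/eqP; rewrite -oppr_eq0 -hb /cb.
  - by rewrite (_ : _ - _ = - cr X Y) ?oppr_eq0 // /cr; ring.
apply: hd; apply: (@lin2 _ (lt Y) (- lu Y) (lt X) (- lu X)).
- by rewrite -h1 /Dd; ring.
- by rewrite -h2 /Dd; ring.
- by rewrite (_ : _ - _ = - cr X Y) ?oppr_eq0 // /cr; ring.
Qed.

Lemma U (K : fieldType) (A B A' B' : line K) d m m' :
  (2%:R : K) != 0 -> cr A B != 0 -> cr B A' != 0 -> cr A' B' != 0 -> cr B' A != 0 ->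
  cr A A' != 0 -> cr B B' != 0 -> dcross A B A' B' != 0 -> ~ (d.1 = 0 /\ d.2 = 0) ->
  E A A' d m = 0 -> E B B' d m = 0 -> E A A' d m' = 0 -> E B B' d m' = 0 -> m = m'.
Proof.
move=> h2 c1 c2 c3 c4 cA cB hdc hd eA eB eA' eB'.
case: (classic (m.1 - m'.1 = 0 /\ m.2 - m'.2 = 0)) => [[w1 w2]|hw].
  by move: w1 w2; case: m {eA eB} => x y; case: m' {eA' eB'} => x' y' /= /subr0_eq -> /subr0_eq ->.
exfalso.
have zA : ca A A' d * (m.1 - m'.1) + cb A A' d * (m.2 - m'.2) = 0 by rewrite -Ediff eA eA' subrr.
have zB : ca B B' d * (m.1 - m'.1) + cb B B' d * (m.2 - m'.2) = 0 by rewrite -Ediff eB eB' subrr.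
have hD := det0 zA zB hw.
pose R := meet B B'; pose P := meet A A'.
have ERB : E B B' d R = 0 by have [r1 r2] := meet_on cB; rewrite /E r1 r2 !mul0r addr0.
have EPA : E A A' d P = 0 by have [r1 r2] := meet_on cA; rewrite /E r1 r2 !mul0r addr0.
have ERA : E A A' d R = 0.
  have zR : ca B B' d * (R.1 - m.1) + cb B B' d * (R.2 - m.2) = 0 by rewrite -Ediff ERB eB subrr.
  have := par_kill hD (ab_nz cB hd) zR; rewrite -Ediff eA subr0 => //.
have EPB : E B B' d P = 0.
  have zP : ca A A' d * (P.1 - m.1) + cb A A' d * (P.2 - m.2) = 0 by rewrite -Ediff EPA eA subrr.
  have hD' : ca B B' d * cb A A' d - cb B B' d * ca A A' d = 0 by rewrite -[RHS]oppr0 -hD; ring.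
  have := par_kill hD' (ab_nz cA hd) zP; rewrite -Ediff eB subr0 => //.
have l1 : (lvec A A' R).1 * d.1 + (lvec A A' R).2 * d.2 = 0
  by rewrite mulrC [_ * d.2]mulrC -E_lvec.
have l2 : (lvec B B' P).1 * d.1 + (lvec B B' P).2 * d.2 = 0
  by rewrite mulrC [_ * d.2]mulrC -E_lvec.
have := F2 c1 c2 c3 c4 cA cB; rewrite -/R -/P (det0 l1 l2 hd) !mul0r => /esym /eqP.
by apply/negP; rewrite !mulf_neq0 // oppr_eq0.
Qed.

Lemma lt_par (K : fieldType) (p1 p3 p2 p4 : point K) :
  (p3.1 - p1.1) * (p4.2 - p2.2) - (p3.2 - p1.2) * (p4.1 - p2.1) = 0 ->
  p1 <> p3 -> p2 <> p4 -> parallel (line_through p1 p3) (line_through p2 p4).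
Proof.
case: p1 => x1 y1; case: p2 => x2 y2; case: p3 => x3 y3; case: p4 => x4 y4 /= h n13 n24.
rewrite /parallel /line_through /line_through_coef /=.
case: eqP => h1; case: eqP => h2 /=.
- ring.
- exfalso; apply: n13; move: h; rewrite h1 mul0r sub0r => /eqP; rewrite oppr_eq0 mulf_eq0.
  case/orP => /eqP; last by move/subr0_eq => e; case: h2; rewrite e subrr.
  by move/subr0_eq => ->; move/subr0_eq: h1 => ->.
- exfalso; apply: n24; move: h; rewrite h2 mulr0 subr0 => /eqP; rewrite mulf_eq0.
  case/orP => /eqP; first by move/subr0_eq => e; case: h1; rewrite e subrr.
  by move/subr0_eq => ->; move/subr0_eq: h2 => ->.
- have -> : (y3 - y1) / (x3 - x1) * 1 - 1 * ((y4 - y2) / (x4 - x2)) =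
    - ((x3 - x1) * (y4 - y2) - (y3 - y1) * (x4 - x2)) / ((x3 - x1) * (x4 - x2)).
    by field; apply/andP; split; apply/eqP.
  by rewrite h oppr0 mul0r.
Qed.

Lemma ncross (K : fieldType) (l X Y : line K) : ~ crosses l X Y ->
  l = X \/ l = Y \/ (cr l X = 0 /\ cr l Y = 0).
Proof.
rewrite /crosses => h.
case: (classic (l = X)) => [|h1]; first by left.
case: (classic (l = Y)) => [|h2]; first by right; left.
right; right; case: (classic (parallel l X /\ parallel l Y)) => [[/parE ? /parE ?] //|h3].
by case: h.
Qed.

Lemma bis_ex (K : fieldType) (A B A' B' l : line K) :
  quadrilateral A B A' B' -> cr A A' != 0 -> cr B B' != 0 ->
  bisects A B A' B' l -> exists m, bisector_midpoint A B A' B' l m.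
Proof.
case=> [[nAB nAA' nAB'] [[nBA' nBB' nA'B'] [_ [pAB pBA' pA'B' pB'A]]]] hA hB hbis.
have c1 := npar pAB; have c2 := npar pBA'; have c3 := npar pA'B'; have c4 := npar pB'A.
have c1' : cr B A != 0 by rewrite crC oppr_eq0.
have c2' : cr A' B != 0 by rewrite crC oppr_eq0.
have c3' : cr B' A' != 0 by rewrite crC oppr_eq0.
have c4' : cr A B' != 0 by rewrite crC oppr_eq0.
case: (classic (crosses l A A')) => hc.
  case hm: (mid l A A') => [m|]; first by exists m; left.
  exfalso.
  have hAl : cr l A = 0 \/ cr l A' = 0.
    by move: hm; rewrite midE; case: eqP => [|_]; [left|case: eqP => [|_]; [right|]].
  case: (classic (crosses l B B')) => hcB.
    have := hbis hc hcB; rewrite hm midE.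
    case: eqP => [hlB|_]; last case: eqP => [hlB'|_] //.
    - by case: hAl => h; [move: c1 | move: c2']; rewrite (par_trans h hlB) eqxx.
    - by case: hAl => h; [move: c4' | move: c3]; rewrite (par_trans h hlB') eqxx.
  case: (ncross hcB) => [el|[el|[h1 h2]]].
  - by subst l; case: hAl => h; [move: c1' | move: c2]; rewrite h eqxx.
  - by subst l; case: hAl => h; [move: c4 | move: c3']; rewrite h eqxx.
  - by move: hB; rewrite (par_trans h1 h2) eqxx.
case: (ncross hc) => [el|[el|[h1 h2]]].
- subst l; exists (pmid (meet A B) (meet A B')); right; split.
  + split => //; split => // [[_ /parE]]; exact/eqP.
  + by rewrite midE (negPf c1) (negPf c4').
- subst l; exists (pmid (meet A' B) (meet A' B')); right; split.
  + split => [h|]; first by apply: nBA'.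
    split => // [[_ /parE]]; exact/eqP.
  + by rewrite midE (negPf c2') (negPf c3).
- by move: hA; rewrite (par_trans h1 h2) eqxx.
Qed.

Lemma Dd_self (K : fieldType) (l : line K) : Dd (dir l) l = 0.
Proof. rewrite /Dd /dir /=; ring. Qed.

Lemma bis_E (K : fieldType) (A B A' B' l : line K) m :
  (2%:R : K) != 0 -> cr A A' != 0 -> cr B B' != 0 ->
  bisects A B A' B' l -> bisector_midpoint A B A' B' l m ->
  E A A' (dir l) m = 0 /\ E B B' (dir l) m = 0.
Proof.
move=> h2 hA hB hbis [[hc hm]|[hc hm]].
- have [eA eon] := mid_E h2 hm; split => //.
  case: (classic (crosses l B B')) => hcB.
    by have := hbis hc hcB; rewrite hm => /esym /(mid_E h2) [].
  case: (ncross hcB) => [el|[el|[h1 h3]]].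
  + by subst l; rewrite /E eon Dd_self !mul0r mulr0 addr0.
  + by subst l; rewrite /E eon Dd_self !mul0r mulr0 addr0.
  + by move: hB; rewrite (par_trans h1 h3) eqxx.
- have [eB eon] := mid_E h2 hm; split => //.
  case: (classic (crosses l A A')) => hcA.
    by have := hbis hcA hc; rewrite hm => /(mid_E h2) [].
  case: (ncross hcA) => [el|[el|[h1 h3]]].
  + by subst l; rewrite /E eon Dd_self !mul0r mulr0 addr0.
  + by subst l; rewrite /E eon Dd_self !mul0r mulr0 addr0.
  + by move: hA; rewrite (par_trans h1 h3) eqxx.
Qed.

Unset Implicit Arguments.

Theorem corollary6p6 (K : fieldType) (char2 : (2%:R : K) != 0)
  (A B A' B' : line K) :
  quadrilateral A B A' B' ->
  ~ parallel A A' -> ~ parallel B B' ->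
  ~ parallel (diag1 A B A' B') (diag2 A B A' B') ->
  forall l1 l2 : line K,
    bisects A B A' B' l1 -> bisects A B A' B' l2 ->
    (Q_antipodal A B A' B' l1 l2 <-> Q_orthogonal A B A' B' l1 l2).
Proof.
move=> hq hAA hBB hdiag l1 l2 hb1 hb2.
have hq' := hq.
case: hq' => [[nAB nAA' nAB'] [[nBA' nBB' nA'B'] [hnc [pAB pBA' pA'B' pB'A]]]].
have c1 := npar pAB; have c2 := npar pBA'; have c3 := npar pA'B'; have c4 := npar pB'A.
have cA := npar hAA; have cB := npar hBB.
have p4 : cr A B * cr B A' * cr A' B' * cr B' A != 0 by rewrite !mulf_neq0.
have nocommon : forall p, ev A p = 0 -> ev A' p = 0 -> ev B p = 0 -> ev B' p = 0 -> False.
  by move=> p h1 h2 h3 h4; apply: hnc; exists p; split.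
have hdc : dcross A B A' B' != 0.
  apply/eqP => h; apply: hdiag; apply: lt_par; first exact: h.
  - move=> e; have [u1 u2] := meet_on c1; have [u3 u4] := meet_on c3.
    by apply: (nocommon (vert1 A B A' B')); [exact u1 | rewrite e; exact u3 | exact u2 | rewrite e; exact u4].
  - move=> e; have [u1 u2] := meet_on c2; have [u3 u4] := meet_on c4.
    by apply: (nocommon (vert2 A B A' B')); [rewrite e; exact u4 | exact u2 | exact u1 | rewrite e; exact u3].
have Qdet : forall d1 d2, Qform A B A' B' d1 d2 =
    d2.1 * (edir A B A' B' d1).2 - d2.2 * (edir A B A' B' d1).1.
  by move=> d1 d2; rewrite /Qform /edir /=; ring.
have refl_E : forall m, E A A' (dir l1) m = 0 -> E B B' (dir l1) m = 0 ->
    E A A' (edir A B A' B' (dir l1)) (refl2 A B A' B' m) = 0 /\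
    E B B' (edir A B A' B' (dir l1)) (refl2 A B A' B' m) = 0.
  move=> m h1 h3; rewrite I1 // I2 // h1 h3 !mulr0; split; ring.
have [m1 bm1] := bis_ex hq cA cB hb1.
have [m2 bm2] := bis_ex hq cA cB hb2.
split.
- case=> [n1 [n2 [bn1 bn2 hmid]]].
  have [eA1 eB1] := bis_E char2 cA cB hb1 bn1.
  have [eA2 eB2] := bis_E char2 cA cB hb2 bn2.
  have hn2 : n2 = refl2 A B A' B' n1.
    move: hmid; rewrite /refl2 /pmid /pscale /padd.
    case: (centroid A B A' B') => cx cy; case: n1 {eA1 eB1 bn1} => x1 y1;
      case: n2 {eA2 eB2 bn2} => x2 y2 /= [<- <-].
    congr (_, _); field; exact: char2.
  have [fA fB] := refl_E n1 eA1 eB1.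
  rewrite -hn2 in fA fB.
  rewrite /Q_orthogonal; apply/eqP; apply: contraT => hQ.
  have hdet : (dir l2).1 * (edir A B A' B' (dir l1)).2 - (dir l2).2 * (edir A B A' B' (dir l1)).1 != 0.
    by rewrite -Qdet.
  have [a1 a2] := Linj eA2 fA hdet cA.
  have [b1 b2] := Linj eB2 fB hdet cB.
  by case: (nocommon n2 a1 a2 b1 b2).
- rewrite /Q_orthogonal => hQ.
  exists m1, m2; split => //.
  have [eA1 eB1] := bis_E char2 cA cB hb1 bm1.
  have [eA2 eB2] := bis_E char2 cA cB hb2 bm2.
  have [fA fB] := refl_E m1 eA1 eB1.
  have enz := @edir_nz _ A B A' B' (dir l1) (@dir_nz _ l1) p4.
  have hdet : (dir l2).1 * (edir A B A' B' (dir l1)).2 - (dir l2).2 * (edir A B A' B' (dir l1)).1 = 0.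
    by rewrite -Qdet.
  have gA := Epar fA hdet enz.
  have gB := Epar fB hdet enz.
  have e := U (d := dir l2) char2 c1 c2 c3 c4 cA cB hdc (@dir_nz _ l2) eA2 eB2 gA gB.
  rewrite e /refl2 /pmid /pscale /padd.
  case: (centroid A B A' B') => cx cy; case: m1 {eA1 eB1 bm1 fA fB e gA gB} => x1 y1 /=.
  congr (_, _); field; exact: char2.
Qed.
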